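(* Let $A$ be an $n\times n$ real matrix whose eigenvalues are distinct. Then the following are equivalent: (i) there exists a vector $B_v\in\mathbb{R}^n$ with at most $k$ nonzero entries such that the system $\frac{dx(t)}{dt}=Ax(t)+B_v u(t)$ is controllable; (ii) there exists a real $n\times n$ diagonal matrix $B_d$ with at most $k$ nonzero entries such that the system $\frac{dx(t)}{dt}=Ax(t)+B_d u(t)$ is controllable.
   Context: Controllability refers to the usual notion for continuous-time linear time-invariant systems $\frac{dx}{dt}=Ax+Bu$ (controllability of the pair $(A,B)$). A vector or matrix is called $k$-sparse if it has at most $k$ nonzero entries; the paper phrases (i) as ''the system $\Sigma_v$ is $k$-sparse controllable'' and (ii) as ''the system $\Sigma_d$ is $k$-sparse controllable''. *)

(* Defs.v *)
From HB Require Import structures.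
From mathcomp Require Import all_boot all_order all_algebra.
From mathcomp Require Import complex.
From mathcomp Require Import reals.
Set Implicit Arguments. Unset Strict Implicit. Unset Printing Implicit Defensive.
Import Order.TTheory GRing.Theory Num.Theory.
Local Open Scope ring_scope.

Definition nnz (F : pzRingType) m p (M : 'M[F]_(m, p)) : nat :=
  #|[set ij : 'I_m * 'I_p | M ij.1 ij.2 != 0]|.

Definition sparse (F : pzRingType) m p (k : nat) (M : 'M[F]_(m, p)) : bool :=
  (nnz M <= k)%N.

Definition ctrb_mx (F : pzRingType) n m (A : 'M[F]_n) (B : 'M[F]_(n, m)) :
  'M[F]_(n, \sum_(i < n) m) :=
  \mxrow_(i < n) (A ^+ i *m B).

(* controllability of the pair (A,B), i.e. of dx/dt = A x + B u *)
Definition controllable (F : fieldType) n m (A : 'M[F]_n) (B : 'M[F]_(n, m)) : bool :=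
  \rank (ctrb_mx A B) == n.

Definition distinct_eigenvalues (R : realType) n (A : 'M[R]_n) : Prop :=
  forall z : R[i],
    (mup z (char_poly (map_mx (real_complex R) A)) <= 1)%N.

(* Main.v *)
Require Import Defs.
From HB Require Import structures.
From mathcomp Require Import all_boot all_order all_algebra.
From mathcomp Require Import complex.
From mathcomp Require Import reals.
Import Order.TTheory GRing.Theory Num.Theory.
Local Open Scope ring_scope.

Lemma ctrb_mulE (F : pzRingType) n m p (X : 'M[F]_(p,n)) (A : 'M_n) (B : 'M_(n,m)) :
  X *m ctrb_mx A B = \mxrow_i (X *m A^+i *m B).
Proof. by rewrite /ctrb_mx mul_mxrow; apply: eq_mxrow => i; rewrite mulmxA. Qed.

Lemma ctrb_eq0 (F : pzRingType) n m p (X : 'M[F]_(p,n)) (A : 'M_n) (B : 'M_(n,m)) :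
  (X *m ctrb_mx A B = 0) <-> (forall i : 'I_n, X *m A^+i *m B = 0).
Proof.
rewrite ctrb_mulE -(mxrow0 (q_ := fun _ => m)); split.
  by move/eq_mxrowP.
by move=> H; apply/eq_mxrowP.
Qed.

Lemma controllableP (F : fieldType) n m (A : 'M[F]_n) (B : 'M_(n,m)) :
  reflect (forall w : 'rV_n, (forall i : 'I_n, w *m A^+i *m B = 0) -> w = 0)
    (controllable A B).
Proof.
apply: (iffP idP).
  move=> cAB w /ctrb_eq0 /eqP; rewrite mulmx_free_eq0 //; by move/eqP.
move=> H; rewrite /controllable -/(row_free _) -kermx_eq0.
apply/rowV0Pn => -[v /sub_kermxP /ctrb_eq0 /H -> ]; by rewrite eqxx.
Qed.

Lemma map_mxrow (aR rR : pzRingType) (f : aR -> rR) q (q_ : 'I_q -> nat) m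
  (B_ : forall j, 'M[aR]_(m, q_ j)) :
  map_mx f (\mxrow_j B_ j) = \mxrow_j map_mx f (B_ j).
Proof. by apply/matrixP => i j; rewrite !mxE. Qed.

Lemma map_mxXn (aR rR : pzRingType) (f : {rmorphism aR -> rR}) n (A : 'M[aR]_n) i :
  map_mx f (A ^+ i) = (map_mx f A) ^+ i.
Proof.
elim: i => [|i IH]; first by rewrite !expr0 map_mx1.
by rewrite !exprS -!mulmxE map_mxM IH.
Qed.

Lemma map_ctrb (aR rR : fieldType) (f : {rmorphism aR -> rR}) n m (A : 'M[aR]_n) (B : 'M_(n,m)) :
  map_mx f (ctrb_mx A B) = ctrb_mx (map_mx f A) (map_mx f B).
Proof.
rewrite /ctrb_mx map_mxrow; apply: eq_mxrow => i.
by rewrite map_mxM map_mxXn.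
Qed.

Lemma controllable_map (aR rR : fieldType) (f : {rmorphism aR -> rR}) n m (A : 'M[aR]_n) (B : 'M_(n,m)) :
  controllable (map_mx f A) (map_mx f B) = controllable A B.
Proof. by rewrite /controllable -map_ctrb mxrank_map. Qed.

Lemma horner_mx_sum (F : comNzRingType) n (A : 'M[F]_n.+1) (p : {poly F}) :
  horner_mx A p = \sum_(j < size p) p`_j *: A ^+ j.
Proof.
rewrite -{1}(coefK p) poly_def rmorph_sum; apply: eq_bigr => j _.
by rewrite -mul_polyC rmorphM /= horner_mx_C rmorphXn /= horner_mx_X -mulmxE mul_scalar_mx.
Qed.

Lemma krylov_all (F : fieldType) n m p (X : 'M[F]_(p,n.+1)) (A : 'M_n.+1) (B : 'M_(n.+1,m)) :
  (forall i : 'I_n.+1, X *m A^+i *m B = 0) -> forall i, X *m A^+i *m B = 0.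
Proof.
move=> H i; elim/ltn_ind: i => i IH.
case: (ltnP i n.+1) => [lt|ge]; first exact: (H (Ordinal lt)).
have -> : i = (i - n.+1 + n.+1)%N by rewrite subnK.
set k := (i - n.+1)%N.
have CH := Cayley_Hamilton A.
have : X *m A^+k *m horner_mx A (char_poly A) *m B = 0 by rewrite CH mulmx0 mul0mx.
rewrite horner_mx_sum size_char_poly big_ord_recr /=.
have -> : (char_poly A)`_n.+1 = 1.
  by have /monicP := char_poly_monic A; rewrite lead_coefE size_char_poly.
rewrite scale1r mulmxDr mulmxDl mulmx_sumr mulmx_suml big1 ?add0r.
  by rewrite -(mulmxA X) (_ : A^+k *m A^+n.+1 = A^+(k + n.+1)) // exprD.
move=> j _; rewrite -scalemxAr -scalemxAl -(mulmxA X) (_ : A^+k *m A^+j = A^+(k + j)); last by rewrite exprD.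
rewrite IH ?scaler0 //.
by rewrite /k -[X in (_ < X)%N](subnK ge) ltn_add2l.
Qed.

Lemma pbh (F : closedFieldType) n m (A : 'M[F]_n.+1) (B : 'M_(n.+1,m)) :
  ~~ controllable A B ->
  exists a (w : 'rV_n.+1), [/\ w != 0, w *m A = a *: w & w *m B = 0].
Proof.
move=> nc.
set W := kermx (ctrb_mx A B).
have WC : W *m ctrb_mx A B = 0 by apply: mulmx_ker.
have Wnz : W != 0 by rewrite /W kermx_eq0.
have Wall := @krylov_all _ _ _ _ W A B (proj1 (@ctrb_eq0 _ _ _ _ W A B) WC).
have stW : stablemx W A.
  apply/sub_kermxP/ctrb_eq0 => i.
  by rewrite -(mulmxA W) -[A *m _]/(A * A^+i) -exprS Wall.
set V := row_base W.
have stV : stablemx V A by rewrite stablemx_row_base.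
have rfV : row_free V := row_base_free W.
have r0 : \rank W != 0%N by rewrite mxrank_eq0.
have [a ra] : exists a, root (char_poly (conjmx V A)) a.
  apply/closed_rootP; rewrite size_char_poly; by case: (\rank W) r0.
move: ra; rewrite -eigenvalue_root_char => /eigenvalueP [v vf vnz].
have : (v <= eigenspace (conjmx V A) a)%MS by apply/eigenspaceP.
rewrite sub_eigenspace_conjmx // => /eigenspaceP wA.
exists a, (v *m V); split => //.
  by rewrite mulmx_free_eq0.
have : (v *m V <= W)%MS by rewrite -(eq_row_base W) submxMl.
move/sub_kermxP/ctrb_eq0/(_ ord0); by rewrite expr0 mulmx1.
Qed.

Lemma mup_prod (F : fieldType) (rs : seq F) x :
  mup x (\prod_(z <- rs) ('X - z%:P)) = count_mem x rs.
Proof.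
elim: rs => [|y rs IH].
  by rewrite big_nil -(expr0 ('X - x%:P)) mup_XsubCX eqxx.
rewrite big_cons mupM ?polyXsubC_eq0 ?monic_neq0 ?monic_prod_XsubC //.
by rewrite -(expr1 ('X - y%:P)) mup_XsubCX IH /= eq_sym; case: (x == y).
Qed.

Lemma distinct_eig (F : closedFieldType) n (A : 'M[F]_n.+1) :
  (forall z, mup z (char_poly A) <= 1)%N ->
  exists rs : seq F, [/\ forall a, eigenvalue A a = (a \in rs),
       forall z, z \in rs -> eigenspace A z != 0 &
       forall z, z \in rs -> (\rank (eigenspace A z) <= 1)%N].
Proof.
move=> Hm.
have [rs Hp] := closed_field_poly_normal (char_poly A).
have lc : lead_coef (char_poly A) = 1 by apply/monicP/char_poly_monic.
rewrite lc scale1r in Hp.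
have eig a : eigenvalue A a = (a \in rs) by rewrite eigenvalue_root_char Hp root_prod_XsubC.
have srs : size rs = n.+1.
  by apply: succn_inj; rewrite -(size_char_poly A) Hp size_prod_XsubC.
have urs : uniq rs.
  apply: count_mem_uniq => x; have := Hm x; rewrite Hp mup_prod.
  case: (boolP (x \in rs)) => [xin|/count_memPn -> //].
  have : (0 < count_mem x rs)%N by rewrite -has_count has_pred1.
  by case: (count_mem x rs) => [|[|k]].
exists rs; split => //.
  by move=> z; rewrite -eig.
pose E (i : 'I_(size rs)) := eigenspace A rs`_i.
have Hdir : mxdirect (\sum_i E i).
  apply: mxdirect_sum_eigenspace => i j _ _ /eqP.
  by rewrite nth_uniq // => /eqP /val_inj.
move: Hdir; rewrite mxdirectE => /= /eqP Hr.
have Hle : (\sum_i \rank (E i) <= n.+1)%N by rewrite -Hr rank_leq_col.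
have E1 i : (1 <= \rank (E i))%N.
  by rewrite lt0n mxrank_eq0 -/(eigenvalue A _) eig mem_nth.
move=> z zin; have zi : (index z rs < size rs)%N by rewrite index_mem.
pose j := Ordinal zi.
have Ej : E j = eigenspace A z by rewrite /E nth_index.
rewrite -Ej; move: Hle; rewrite (bigD1 j) //=.
have : (\sum_(i | i != j) 1 <= \sum_(i | i != j) \rank (E i))%N by apply: leq_sum.
rewrite sum1_card cardC1 card_ord [X in X.-1]srs /=.
move=> h1 h2; move: (leq_trans (leq_add (leqnn (\rank (E j))) h1) h2).
by move=> h; rewrite -(leq_add2r n) add1n.
Qed.

Lemma nnz0 (F : pzRingType) m p : nnz (0 : 'M[F]_(m,p)) = 0%N.
Proof.
rewrite /nnz (_ : [set _ | _] = set0) ?cards0 //.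
by apply/setP => -[i j]; rewrite !inE mxE eqxx.
Qed.

Lemma nnz_diag (F : pzRingType) n (d : 'rV[F]_n) :
  nnz (diag_mx d) = #|[set i | d 0 i != 0]|.
Proof.
rewrite /nnz (_ : [set _ | _] = [set (i, i) | i in [set i | d 0 i != 0]]).
  by rewrite card_imset // => x y [].
apply/setP => -[i j]; rewrite !inE mxE /=; apply/idP/imsetP.
  case: (eqVneq i j) => [<-|]; last by rewrite ?mulr0n ?eqxx.
  by rewrite mulr1n => h; exists i; rewrite ?inE.
by case=> x; rewrite inE => h [-> ->]; rewrite eqxx mulr1n.
Qed.

Lemma nnz_col (F : pzRingType) n (b : 'cV[F]_n) :
  nnz b = #|[set i | b i 0 != 0]|.
Proof.
rewrite /nnz (_ : [set _ | _] = [set (i, 0) | i in [set i | b i 0 != 0]]).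
  by rewrite card_imset // => x y [].
apply/setP => -[i j]; rewrite !inE /=; apply/idP/imsetP.
  by rewrite (ord1 j) => h; exists i; rewrite ?inE.
by case=> x; rewrite inE => h [-> ->].
Qed.

Lemma eig_pow (F : pzRingType) n (A : 'M[F]_n) (v : 'rV_n) a i :
  v *m A = a *: v -> v *m A ^+ i = a ^+ i *: v.
Proof.
move=> h; elim: i => [|i IH]; first by rewrite !expr0 mulmx1 scale1r.
by rewrite exprSr -mulmxE mulmxA IH -scalemxAl h scalerA -exprSr.
Qed.

Theorem theorem2 (R : realType) (n k : nat) (A : 'M[R]_n) :
  distinct_eigenvalues A ->
  ((exists Bv : 'cV[R]_n, sparse k Bv /\ controllable A Bv) <->
   (exists d : 'rV[R]_n, sparse k (diag_mx d) /\ controllable A (diag_mx d))).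
Proof.
move=> hA; split.
  case=> b [sb cb]; exists b^T; split.
    rewrite /sparse nnz_diag; move: sb; rewrite /sparse nnz_col.
    by rewrite (_ : [set i | b^T 0 i != 0] = [set i | b i 0 != 0]) //; apply/setP => i; rewrite !inE mxE.
  apply/controllableP => w H; move/controllableP: cb; apply => i.
  rewrite (_ : b = diag_mx b^T *m const_mx 1) ?mulmxA ?H ?mul0mx //.
  by apply/matrixP => i' j; rewrite mul_diag_mx !mxE mulr1 (ord1 j).
case=> d [sd cd].
case: n A d hA sd cd => [|n] A d hA sd cd.
  exists 0; split; first by rewrite /sparse nnz0.
  by apply/controllableP => w _; apply/matrixP => i [].
set f := real_complex R.
set AC := map_mx f A.
set D := diag_mx d.
have [rs [eig Enz E1]] := @distinct_eig _ _ AC hA.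
have cDC : controllable AC (map_mx f D) by rewrite controllable_map.
have Mnz z : z \in rs -> eigenspace AC z *m map_mx f D != 0.
  move=> zin; apply/negP => /eqP M0.
  have /rowV0Pn [v vE vnz] := Enz z zin.
  move/controllableP: cDC => /(_ v) vz; move: vnz; rewrite vz ?eqxx // => i.
  have /eigenspaceP vA := vE.
  rewrite (@eig_pow _ _ _ _ _ i vA) -scalemxAl.
  have [X ->] := submxP vE.
  by rewrite -mulmxA M0 mulmx0 scaler0.
pose M z := eigenspace AC z *m map_mx f D.
pose q z (i : 'I_n.+1) : {poly R[i]} := \poly_(j < n.+1) (M z) i (inord j).
pose Q := \prod_(z <- rs) \prod_(i < n.+1 | q z i != 0) q z i.
have Qnz : Q != 0.
  rewrite prodf_seq_neq0; apply/allP => z _ /=; rewrite prodf_seq_neq0.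
  by apply/allP => i _; apply/implyP.
have [t ht] : exists t : nat, ~~ root Q t%:R.
  case: (boolP (has (fun t : nat => ~~ root Q t%:R) (iota 0 (size Q)))).
    by case/hasP => t _ ht; exists t.
  move=> hn; exfalso.
  have H1 : all (root Q) [seq (t%:R : R[i]) | t <- iota 0 (size Q)].
    rewrite all_map; apply/allP => t tin /=; have := hasPn hn t tin; by rewrite negbK.
  have H2 : uniq [seq (t%:R : R[i]) | t <- iota 0 (size Q)].
    rewrite map_inj_uniq ?iota_uniq // => x y /eqP; rewrite eqr_nat; by move/eqP.
  have := max_poly_roots Qnz H1 H2.
  by rewrite size_map size_iota ltnn.
pose c : 'cV[R]_n.+1 := \col_j ((t%:R : R) ^+ j).
exists (D *m c); split.
  rewrite /sparse nnz_col; apply: leq_trans sd; rewrite nnz_diag.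
  apply: subset_leq_card; apply/subsetP => i; rewrite !inE /D mul_diag_mx mxE.
  by apply: contraNneq => ->; rewrite mul0r.
case: (boolP (controllable A (D *m c))) => // nc; exfalso.
rewrite -(@controllable_map _ _ f) in nc.
have [a [w [wnz wA wb]]] := @pbh _ _ _ _ _ nc.
have ain : a \in rs by rewrite -eig; apply/eigenvalueP; exists w.
have wE : (w <= eigenspace AC a)%MS by apply/eigenspaceP.
have Ew : (eigenspace AC a <= w)%MS.
  rewrite -(mxrank_leqif_sup wE).2 eqn_leq rank_rV wnz /= E1 // andbT.
  by rewrite lt0n mxrank_eq0 Enz.
have [X EX] := submxP Ew.
have [i qi] : exists i, q a i != 0.
  apply/existsP; apply: contraNT (Mnz a ain) => /existsPn H.
  apply/eqP/matrixP => i j; rewrite [RHS]mxE.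
  have := H i; rewrite negbK => /eqP /(congr1 (fun p : {poly R[i]} => p`_j)).
  by rewrite coef_poly ltn_ord inord_val coef0.
have Mc0 : M a *m map_mx f c = 0.
  rewrite /M EX -!mulmxA -map_mxM.
  by move: wb; rewrite map_mxM => ->; rewrite mulmx0.
move: ht; rewrite /root horner_prod prodf_seq_eq0; apply/negP/negPn/hasP.
exists a => //=; rewrite horner_prod prodf_seq_eq0; apply/hasP.
exists i; first by rewrite mem_index_enum.
rewrite qi /= horner_poly.
apply/eqP; rewrite -[RHS](_ : (M a *m map_mx f c) i 0 = 0); last by rewrite Mc0 mxE.
rewrite [in RHS]mxE; apply: eq_bigr => j _; rewrite inord_val; congr (_ * _).
by rewrite !mxE /f rmorphXn rmorph_nat.
Qed.
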